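(* Let $G$ be a connected $2K_2$-free graph containing an induced diamond with vertex set $L_0=\{v_1,v_2,v_3,v_4\}$ and edge set $\{v_1v_2,v_2v_3,v_3v_4,v_4v_1,v_2v_4\}$. Let $L_1$ be the set of vertices of $V(G)\setminus L_0$ having a neighbor in $L_0$, and $L_2=V(G)\setminus(L_0\cup L_1)$. For $i\in\{1,2,3\}$ let $X_i=\{x\in L_1: N(x)\cap L_0=\{v_i\}\}$, and let $Y_1=\{x\in L_1: N(x)\cap L_0=\{v_1,v_2\}\}$, $Y_2=\{x\in L_1: N(x)\cap L_0=\{v_2,v_3\}\}$, $Z_1=\{x\in L_1: N(x)\cap L_0=\{v_1,v_3\}\}$, $Z_2=\{x\in L_1: N(x)\cap L_0=\{v_1,v_2,v_3\}\}$. Then: (1) $V(G)=N(v_4)\cup\{v_4\}\cup X_1\cup X_2\cup X_3\cup Y_1\cup Y_2\cup Z_1\cup Z_2\cup L_2$; (2) $X_1=\emptyset$ or $X_3=\emptyset$; (3) $X_1\cup X_2\cup Y_1$, $Y_2$, $Z_1$ and $L_2$ are independent sets; (4) there are no edges between $X_1\cup X_2\cup X_3\cup Y_1\cup Y_2\cup Z_1$ and $L_2$.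
   Context: All graphs are finite, simple and undirected. $2K_2$ is the disjoint union of two edges; $G$ is $2K_2$-free if it has no induced subgraph isomorphic to $2K_2$. $N(x)$ is the set of neighbors of $x$. A diamond is $K_4$ minus an edge. *)

(* Defs.v *)
From mathcomp Require Import all_boot.
Set Implicit Arguments. Unset Strict Implicit. Unset Printing Implicit Defensive.

Definition simple_graph (T : finType) (e : rel T) : Prop :=
  irreflexive e /\ symmetric e.

Definition nbhd (T : finType) (e : rel T) (x : T) : {set T} := [set y | e x y].

Definition connected_graph (T : finType) (e : rel T) : Prop :=
  forall x y : T, connect e x y.

Definition twoK2_free (T : finType) (e : rel T) : Prop :=
  ~ exists a b c d : T,
      [/\ uniq [:: a; b; c; d], e a b, e c d &
          [&& ~~ e a c, ~~ e a d, ~~ e b c & ~~ e b d]].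

Definition independent (T : finType) (e : rel T) (S : {set T}) : Prop :=
  forall x y, x \in S -> y \in S -> ~~ e x y.

Definition induced_diamond (T : finType) (e : rel T) (v1 v2 v3 v4 : T) : Prop :=
  [/\ uniq [:: v1; v2; v3; v4],
      [&& e v1 v2, e v2 v3, e v3 v4, e v4 v1 & e v2 v4] & ~~ e v1 v3].

Section Levels.
Variables (T : finType) (e : rel T) (v1 v2 v3 v4 : T).
Definition L0 : {set T} := [set v1; v2; v3; v4].
Definition L1 : {set T} :=
  [set x | (x \notin L0) && (nbhd e x :&: L0 != set0)].
Definition L2 : {set T} := ~: (L0 :|: L1).
Definition trace (A : {set T}) : {set T} :=
  [set x in L1 | nbhd e x :&: L0 == A].
End Levels.

(* Main.v *)
Require Import Defs.
From mathcomp Require Import all_boot.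

Section H.
Variables (T : finType) (e : rel T) (v1 v2 v3 v4 : T).

Lemma key (Hs : simple_graph e) (H2 : twoK2_free e) x y a b :
  e x y -> e a b -> ~~ e x a -> ~~ e x b -> ~~ e y a -> ~~ e y b -> False.
Proof.
case: Hs => irr sym Exy Eab Hxa Hxb Hya Hyb; apply: H2.
have Eba : e b a by rewrite sym.
have nxy : x != y by apply/eqP => ?; subst; rewrite irr in Exy.
have nab : a != b by apply/eqP => ?; subst; rewrite irr in Eab.
have nxa : x != a by apply/eqP => ?; subst; rewrite Eab in Hxb.
have nxb : x != b by apply/eqP => ?; subst; rewrite Eba in Hxa.
have nya : y != a by apply/eqP => ?; subst; rewrite Eab in Hyb.
have nyb : y != b by apply/eqP => ?; subst; rewrite Eba in Hya.
exists x, y, a, b; split => //; last by rewrite Hxa Hxb Hya Hyb.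
by rewrite /= !inE !negb_or nxy nxa nxb nya nyb nab.
Qed.

Lemma inL0 v : (v \in L0 v1 v2 v3 v4) = [|| v == v1, v == v2, v == v3 | v == v4].
Proof. by rewrite /L0 !inE -!orbA. Qed.

Lemma traceP (A : {set T}) x : x \in trace e v1 v2 v3 v4 A ->
  x \in L1 e v1 v2 v3 v4 /\ forall v, v \in L0 v1 v2 v3 v4 -> e x v = (v \in A).
Proof.
rewrite inE => /andP [H /eqP HA]; split => // v Hv.
by rewrite -HA in_setI Hv andbT /nbhd inE.
Qed.

Lemma traceI (A : {set T}) x : x \in L1 e v1 v2 v3 v4 -> A \subset L0 v1 v2 v3 v4 ->
  (forall v, v \in L0 v1 v2 v3 v4 -> e x v = (v \in A)) -> x \in trace e v1 v2 v3 v4 A.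
Proof.
move=> H1 HA H; rewrite inE H1 /=; apply/eqP/setP => z; rewrite in_setI /nbhd inE.
case Hz: (z \in L0 v1 v2 v3 v4); first by rewrite andbT H.
rewrite andbF; apply/esym/negbTE; apply: contraFN Hz; apply: (subsetP HA).
Qed.
Lemma L2P y : y \in L2 e v1 v2 v3 v4 ->
  y \notin L0 v1 v2 v3 v4 /\ forall v, v \in L0 v1 v2 v3 v4 -> ~~ e y v.
Proof.
rewrite /L2 inE in_setU negb_or => /andP [H0 H1]; split => // v Hv.
apply: contra H1 => Hyv; rewrite /L1 inE H0 /=; apply/set0Pn; exists v.
by rewrite in_setI /nbhd inE Hyv Hv.
Qed.
Lemma traceP4 (A : {set T}) x : x \in trace e v1 v2 v3 v4 A ->
  [/\ e x v1 = (v1 \in A), e x v2 = (v2 \in A), e x v3 = (v3 \in A) & e x v4 = (v4 \in A)].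
Proof.
case/traceP => _ h; split; apply: h; rewrite inL0 eqxx ?orbT //.
Qed.

Lemma L2P4 y : y \in L2 e v1 v2 v3 v4 ->
  [/\ ~~ e y v1, ~~ e y v2, ~~ e y v3 & ~~ e y v4].
Proof.
case/L2P => _ h; split; apply: h; rewrite inL0 eqxx ?orbT //.
Qed.
End H.

Ltac norm := repeat match goal with H : ?a = false |- _ => move/negbT: H => H end.
Ltac tr H N := let h := fresh in have h := @traceP4 _ _ _ _ _ _ _ _ H; rewrite !inE ?eqxx ?N /= in h;
  case: h => ? ? ? ?; norm.
Ltac t2 H := case: (@L2P4 _ _ _ _ _ _ _ H) => ? ? ? ?.
Ltac cl := first [done | match goal with S : symmetric _ |- _ => by rewrite S end].
Ltac kill x y a b := match goal with S : simple_graph ?E |- _ => apply: (@key _ E S _ x y a b); cl end.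



Ltac subL0 := let z := fresh "z" in let Hz := fresh "Hz" in apply/subsetP => z; rewrite inL0 !inE -?orbA => Hz;
  repeat (case/orP: Hz => [/eqP->|Hz]; first by rewrite eqxx ?orbT);
  by move/eqP: Hz => ->; rewrite eqxx ?orbT.

Theorem lemma3p6 (T : finType) (e : rel T) (v1 v2 v3 v4 : T) :
  simple_graph e -> connected_graph e -> twoK2_free e ->
  induced_diamond e v1 v2 v3 v4 ->
  let L0 := L0 v1 v2 v3 v4 in
  let L1 := L1 e v1 v2 v3 v4 in
  let L2 := L2 e v1 v2 v3 v4 in
  let X1 := trace e v1 v2 v3 v4 [set v1] in
  let X2 := trace e v1 v2 v3 v4 [set v2] in
  let X3 := trace e v1 v2 v3 v4 [set v3] in
  let Y1 := trace e v1 v2 v3 v4 [set v1; v2] in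
  let Y2 := trace e v1 v2 v3 v4 [set v2; v3] in
  let Z1 := trace e v1 v2 v3 v4 [set v1; v3] in
  let Z2 := trace e v1 v2 v3 v4 [set v1; v2; v3] in
  [/\ [set: T] = nbhd e v4 :|: [set v4] :|: X1 :|: X2 :|: X3 :|: Y1 :|: Y2
                   :|: Z1 :|: Z2 :|: L2,
      X1 = set0 \/ X3 = set0,
      [/\ independent e (X1 :|: X2 :|: Y1), independent e Y2,
          independent e Z1 & independent e L2] &
      forall x y, x \in X1 :|: X2 :|: X3 :|: Y1 :|: Y2 :|: Z1 -> y \in L2 -> ~~ e x y].
Proof.
move=> Hs _ H2 [Hu /and5P [e12 e23 e34 e41 e24] n13].
move=> L0 L1 L2 X1 X2 X3 Y1 Y2 Z1 Z2.
have [irr sym] := Hs.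
move: Hu; rewrite /= !inE !negb_or => /and4P [/and3P [n12 n13' n14] /andP [n23 n24] n34 _].
have e21 : e v2 v1 by rewrite sym.
have e32 : e v3 v2 by rewrite sym.
have e43 : e v4 v3 by rewrite sym.
have e14 : e v1 v4 by rewrite sym.
have e42 : e v4 v2 by rewrite sym.
have n31 : ~~ e v3 v1 by rewrite sym.
have in1 : v1 \in L0 by rewrite inL0 eqxx.
have in2 : v2 \in L0 by rewrite inL0 eqxx orbT.
have in3 : v3 \in L0 by rewrite inL0 eqxx !orbT.
have in4 : v4 \in L0 by rewrite inL0 eqxx !orbT.
have q12 : (v1 == v2) = false by apply/negbTE.
have q21 : (v2 == v1) = false by rewrite eq_sym; apply/negbTE.
have q13 : (v1 == v3) = false by apply/negbTE.
have q31 : (v3 == v1) = false by rewrite eq_sym; apply/negbTE.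
have q14 : (v1 == v4) = false by apply/negbTE.
have q41 : (v4 == v1) = false by rewrite eq_sym; apply/negbTE.
have q23 : (v2 == v3) = false by apply/negbTE.
have q32 : (v3 == v2) = false by rewrite eq_sym; apply/negbTE.
have q24 : (v2 == v4) = false by apply/negbTE.
have q42 : (v4 == v2) = false by rewrite eq_sym; apply/negbTE.
have q34 : (v3 == v4) = false by apply/negbTE.
have q43 : (v4 == v3) = false by rewrite eq_sym; apply/negbTE.
have neqs := (q12, q21, q13, q31, q14, q41, q23, q32, q24, q42, q34, q43).
split.
- apply/setP => x; rewrite in_setT !in_setU.
  case H0: (x \in L0).
    move: H0; rewrite inL0 => /or4P[]/eqP->; 
    by rewrite /nbhd in_set ?in_set1 ?e41 ?e42 ?e43 ?eqxx ?orbT.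
  case H1: (x \in L1); last first.
    have -> : x \in L2 by rewrite /L2 inE in_setU H0 H1.
    by rewrite ?orbT.
  case E4: (e v4 x).
    by rewrite /nbhd inE E4.
  have n4 : e x v4 = false by rewrite sym.
  case E1: (e x v1); case E2: (e x v2); case E3: (e x v3);
  first [ have -> : x \in X1 by (apply: traceI => //; [subL0 | move=> v; rewrite inL0 => /or4P[]/eqP->; by rewrite ?in_setU ?in_set1 ?eqxx ?neqs ?E1 ?E2 ?E3 ?n4])
        | have -> : x \in X2 by (apply: traceI => //; [subL0 | move=> v; rewrite inL0 => /or4P[]/eqP->; by rewrite ?in_setU ?in_set1 ?eqxx ?neqs ?E1 ?E2 ?E3 ?n4])
        | have -> : x \in X3 by (apply: traceI => //; [subL0 | move=> v; rewrite inL0 => /or4P[]/eqP->; by rewrite ?in_setU ?in_set1 ?eqxx ?neqs ?E1 ?E2 ?E3 ?n4])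
        | have -> : x \in Y1 by (apply: traceI => //; [subL0 | move=> v; rewrite inL0 => /or4P[]/eqP->; by rewrite ?in_setU ?in_set1 ?eqxx ?neqs ?E1 ?E2 ?E3 ?n4])
        | have -> : x \in Y2 by (apply: traceI => //; [subL0 | move=> v; rewrite inL0 => /or4P[]/eqP->; by rewrite ?in_setU ?in_set1 ?eqxx ?neqs ?E1 ?E2 ?E3 ?n4])
        | have -> : x \in Z1 by (apply: traceI => //; [subL0 | move=> v; rewrite inL0 => /or4P[]/eqP->; by rewrite ?in_setU ?in_set1 ?eqxx ?neqs ?E1 ?E2 ?E3 ?n4])
        | have -> : x \in Z2 by (apply: traceI => //; [subL0 | move=> v; rewrite inL0 => /or4P[]/eqP->; by rewrite ?in_setU ?in_set1 ?eqxx ?neqs ?E1 ?E2 ?E3 ?n4])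
        | idtac ];
  try by rewrite ?orbT ?orTb.
    move: H1; rewrite /L1 /Defs.L1 in_set => /andP[_ /set0Pn [v]]; rewrite in_setI /nbhd in_set => /andP[Hv].
  rewrite inL0 => /or4P[]/eqP Ev; subst v; by rewrite ?E1 ?E2 ?E3 ?n4 in Hv.
- have [->|[x Hx]] := set_0Vmem X1; first by left.
  right; apply/setP => y; rewrite in_set0; apply/negP => Hy.
  tr Hx neqs; tr Hy neqs.
  case Exy: (e x y); norm; [kill x y v2 v4 | kill x v1 y v3].
- split.
  + move=> x y; rewrite !in_setU -!orbA => /or3P[]Hx /or3P[]Hy; tr Hx neqs; tr Hy neqs;
    apply/negP => Exy; kill x y v3 v4.
  + move=> x y Hx Hy; tr Hx neqs; tr Hy neqs; apply/negP => Exy; kill x y v1 v4.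
  + move=> x y Hx Hy; tr Hx neqs; tr Hy neqs; apply/negP => Exy; kill x y v2 v4.
  + move=> x y Hx Hy; t2 Hx; t2 Hy; apply/negP => Exy; kill x y v1 v2.
- move=> x y; rewrite !in_setU -!orbA => H Hy; t2 Hy; apply/negP => Exy.
  repeat (case/orP: H => [Hx|H]; first by tr Hx neqs;
    first [kill x y v3 v4 | kill x y v1 v4 | kill x y v2 v4]).
  tr H neqs; first [kill x y v3 v4 | kill x y v1 v4 | kill x y v2 v4].
Qed.
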